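(* Consider instances with two candidates $P,Q$. Let $\mathcal M$ be any deterministic mechanism which selects a winner among $\{P,Q\}$ using only the exact preference strengths of the voters (for each voter $i$: which of $P,Q$ it prefers, and the exact value of its preference strength). Then the worst-case distortion of $\mathcal M$ is at least $\sqrt{2}$; that is, for every $\varepsilon>0$ there is an instance on which the candidate selected by $\mathcal M$ has distortion at least $\sqrt{2}-\varepsilon$.
   Context: Voters $N=\{1,\dots,n\}$ and a finite set of candidates $\mathcal C$ are points of an arbitrary (unknown) metric space $(X,d)$. Voter $i$ prefers candidate $P$ to candidate $Q$ only if $d(i,P)\le d(i,Q)$, and the strength of this preference is $\alpha_i^{PQ}=d(i,Q)/d(i,P)\ge 1$. The social cost of a point $Y\in X$ is $SC(Y)=\sum_{i\in N}d(i,Y)$. If a mechanism selects winner $P_I$ on instance $I=(N,\mathcal C,d)$, the distortion of $P_I$ is $SC(P_I)/\min_{Z\in\mathcal C}SC(Z)$, and the (worst-case) distortion of the mechanism is the supremum of this ratio over all instances. *)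

(* Defs.v *)
From Stdlib Require Import Reals List.
Open Scope R_scope.

Record is_metric (X : Type) (d : X -> X -> R) : Prop := {
  metric_nonneg : forall x y, 0 <= d x y;
  metric_eq0    : forall x y, d x y = 0 <-> x = y;
  metric_sym    : forall x y, d x y = d y x;
  metric_tri    : forall x y z, d x z <= d x y + d y z
}.

Definition SC {X : Type} (d : X -> X -> R) (N : list X) (Y : X) : R :=
  fold_right (fun i acc => d i Y + acc) 0 N.

(* Preference strength of a voter at distance a from its preferred candidate
   and distance b >= a from the other one: b / a.  [None] encodes the value
   +infinity (voter located at its preferred candidate, other one farther);
   the degenerate case a = b = 0 gives strength 1. *)
Definition strength (a b : R) : option R :=
  if Req_EM_T a 0 then (if Req_EM_T b 0 then Some 1 else None) else Some (b / a).

(* A tied voter (strength exactly 1) is reported as preferring P; since its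
   strength 1 reveals the tie, the bit carries no further information. *)
Definition report {X : Type} (d : X -> X -> R) (P Q : X) (i : X) : bool * option R :=
  if Rle_dec (d i P) (d i Q) then (true, strength (d i P) (d i Q))
  else (false, strength (d i Q) (d i P)).

(* A deterministic mechanism for two candidates: maps the (ordered) list of
   voter reports to a winner, [true] = P, [false] = Q. *)
Definition mechanism := list (bool * option R) -> bool.

Definition winner {X : Type} (M : mechanism) (d : X -> X -> R) (N : list X) (P Q : X) : X :=
  if M (map (report d P Q) N) then P else Q.

Definition distortion {X : Type} (d : X -> X -> R) (N : list X) (P Q W : X) : R :=
  SC d N W / Rmin (SC d N P) (SC d N Q).

(* Main.v *)
Require Import Defs.
From Stdlib Require Import Reals List Lra.
Open Scope R_scope.

Lemma met_R : is_metric R (fun x y => Rabs (x - y)).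
Proof.
  split.
  - intros; apply Rabs_pos.
  - intros x y; split; intro H.
    + destruct (Req_dec (x - y) 0) as [E|E]; [lra|].
      apply Rabs_no_R0 in E; contradiction.
    + subst; replace (y - y) with 0 by ring; apply Rabs_R0.
  - intros; apply Rabs_minus_sym.
  - intros x y z; replace (x - z) with ((x - y) + (y - z)) by ring; apply Rabs_triang.
Qed.

Lemma rep_P {X} (d : X -> X -> R) P Q i :
  0 < d i P -> d i P <= d i Q -> report d P Q i = (true, Some (d i Q / d i P)).
Proof.
  intros H1 H2; unfold report, strength.
  destruct (Rle_dec _ _); [|lra].
  destruct (Req_EM_T _ _); [lra|reflexivity].
Qed.

Lemma rep_Q {X} (d : X -> X -> R) P Q i :
  0 < d i Q -> d i Q < d i P -> report d P Q i = (false, Some (d i P / d i Q)).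
Proof.
  intros H1 H2; unfold report, strength.
  destruct (Rle_dec _ _); [lra|].
  destruct (Req_EM_T _ _); [lra|reflexivity].
Qed.

Theorem mainTheorem1 :
  forall (M : mechanism) (eps : R), 0 < eps ->
  exists (X : Type) (d : X -> X -> R) (N : list X) (P Q : X),
    is_metric X d /\
    0 < Rmin (SC d N P) (SC d N Q) /\
    sqrt 2 - eps <= distortion d N P Q (winner M d N P Q).
Proof.
  intros M eps Heps.
  set (s := sqrt 2).
  assert (Hs2 : s * s = 2) by (apply sqrt_sqrt; lra).
  assert (Hs : 0 < s) by (apply sqrt_lt_R0; lra).
  set (d := fun x y : R => Rabs (x - y)).
  set (L := (true, Some (1 + s)) :: (false, Some (1 + s)) :: nil).
  destruct (M L) eqn:HM.
  - (* instance A: Q better *)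
    exists R, d, (1 :: (3 + 2 * s) :: nil), 0, (2 + s).
    assert (e1 : d 1 0 = 1) by (unfold d; rewrite Rabs_right; lra).
    assert (e2 : d 1 (2 + s) = 1 + s) by (unfold d; rewrite Rabs_left; lra).
    assert (e3 : d (3 + 2 * s) 0 = 3 + 2 * s) by (unfold d; rewrite Rabs_right; lra).
    assert (e4 : d (3 + 2 * s) (2 + s) = 1 + s) by (unfold d; rewrite Rabs_right; lra).
    assert (Hw : winner M d (1 :: (3 + 2 * s) :: nil) 0 (2 + s) = 0).
    { unfold winner. simpl.
      rewrite (rep_P d 0 (2 + s) 1) by lra.
      rewrite (rep_Q d 0 (2 + s) (3 + 2 * s)) by lra.
      rewrite e1, e2, e3, e4.
      replace ((1 + s) / 1) with (1 + s) by (unfold Rdiv; rewrite Rinv_1; ring).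
      replace ((3 + 2 * s) / (1 + s)) with (1 + s) by (field_simplify_eq; [nra|lra]).
      fold L. rewrite HM. reflexivity. }
    rewrite Hw. unfold distortion, SC; simpl.
    rewrite e1, e2, e3, e4.
    rewrite Rmin_right by lra.
    split; [exact met_R|]. split; [lra|].
    replace ((1 + (3 + 2 * s + 0)) / (1 + s + (1 + s + 0))) with s.
    + lra.
    + field_simplify_eq; [nra|lra].
  - (* instance B: P better *)
    exists R, d, ((- (1 + s)) :: (1 + s) :: nil), 0, (2 + s).
    assert (e1 : d (- (1 + s)) 0 = 1 + s) by (unfold d; rewrite Rabs_left; lra).
    assert (e2 : d (- (1 + s)) (2 + s) = 3 + 2 * s) by (unfold d; rewrite Rabs_left; lra).
    assert (e3 : d (1 + s) 0 = 1 + s) by (unfold d; rewrite Rabs_right; lra).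
    assert (e4 : d (1 + s) (2 + s) = 1) by (unfold d; rewrite Rabs_left; lra).
    assert (Hw : winner M d ((- (1 + s)) :: (1 + s) :: nil) 0 (2 + s) = 2 + s).
    { unfold winner. simpl.
      rewrite (rep_P d 0 (2 + s) (- (1 + s))) by lra.
      rewrite (rep_Q d 0 (2 + s) (1 + s)) by lra.
      rewrite e1, e2, e3, e4.
      replace ((3 + 2 * s) / (1 + s)) with (1 + s) by (field_simplify_eq; [nra|lra]).
      replace ((1 + s) / 1) with (1 + s) by (unfold Rdiv; rewrite Rinv_1; ring).
      fold L. rewrite HM. reflexivity. }
    rewrite Hw. unfold distortion, SC; simpl.
    rewrite e1, e2, e3, e4.
    rewrite Rmin_left by lra.
    split; [exact met_R|]. split; [lra|].
    replace ((3 + 2 * s + (1 + 0)) / (1 + s + (1 + s + 0))) with s.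
    + lra.
    + field_simplify_eq; [nra|lra].
Qed.
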